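(* Let $n\ge3$ and $R$ a commutative ring containing an invertible element $v$. In $D_n$, for every $i$ (indices modulo $n$), $$E_{\overline{i+2}}E_{\overline{i+3}}\cdots E_{\overline{i+n}}=u^2E_i,$$ where the left side is the product of the $n-1$ elements $E_{\overline{i+2}},E_{\overline{i+3}},\dots,E_{\overline{i+n}}=E_{\bar i}$ in this order.
   Context: An affine $n$-diagram consists of the nodes $\mathbb{Z}\times\{0,1\}\subset\mathbb{R}^2$ (bottom row $\mathbb{Z}\times\{0\}$, top row $\mathbb{Z}\times\{1\}$) together with curves called edges such that: every node is an endpoint of exactly one edge; edges lie in $\mathbb{R}\times[0,1]$; an edge not joining two nodes is an infinite horizontal line meeting no node, and there are finitely many such; no two edges intersect; the diagram is invariant under horizontal translation by $n$. Diagrams are taken up to isotopy. The product $AB$: place $A$ on top of $B$, identify the bottom row of $A$ with the top row of $B$, remove the $x$ closed loops formed to get a diagram $C$; $AB=(v+v^{-1})^xC$. $D_n$ is the $R$-algebra with basis the affine $n$-diagrams and this product. $u$ is the diagram joining each bottom node $(j,0)$ to the top node $(j+1,1)$ by a straight segment. For $1\le i\le n$, $E_i$ is the diagram having, for each $k\equiv i\pmod n$, minimal horizontal edges joining $(k,1)$ to $(k+1,1)$ and $(k,0)$ to $(k+1,0)$, and straight vertical edges joining $(j,0)$ to $(j,1)$ for all $j\not\equiv i,i+1\pmod n$; $\bar i$ denotes the residue of $i$ mod $n$. *)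

(* Defs.v *)
From HB Require Import structures.
From mathcomp Require Import all_boot all_order all_algebra.
Set Implicit Arguments. Unset Strict Implicit. Unset Printing Implicit Defensive.
Import Order.TTheory GRing.Theory Num.Theory.
Local Open Scope ring_scope.

(** Nodes: (k, true) is the top node (k,1), (k, false) the bottom node (k,0). *)
Definition node := (int * bool)%type.

(** A (raw) affine n-diagram up to isotopy: the matching of nodes it induces,
    stored (using n-periodicity) as the lists of partners of the top nodes
    (r,1), 0<=r<n, and of the bottom nodes (r,0), 0<=r<n, together with its
    number of infinite horizontal lines. *)
Definition rdiag := ((seq node * seq node) * nat)%type.

Definition shiftn (n : nat) (k : int) : int := k - (k %% n%:Z)%Z.

Definition mt (n : nat) (d : rdiag) (x : node) : node :=
  let y := nth x (if x.2 then d.1.1 else d.1.2) (absz (x.1 %% n%:Z)%Z) in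
  (shiftn n x.1 + y.1, y.2).

Definition mk_rdiag (n : nat) (f : node -> node) (l : nat) : rdiag :=
  (([seq f (r%:Z, true) | r <- iota 0 n], [seq f (r%:Z, false) | r <- iota 0 n]), l).

(** Validity (the basis of D_n): order of the boundary of the strip read as a
    circle (top row left to right, then bottom row right to left). *)
Definition node_lt (x y : node) : bool :=
  match x.2, y.2 with
  | true, true => x.1 < y.1
  | true, false => true
  | false, true => false
  | false, false => y.1 < x.1
  end.

Definition is_diagram (n : nat) (d : rdiag) : Prop :=
  [/\ (0 < n)%N, size d.1.1 = n & size d.1.2 = n] /\
  [/\ forall x, mt n d (mt n d x) = x,
      forall x, mt n d x != x,
      forall x y, ~~ [&& node_lt x y, node_lt y (mt n d x) & node_lt (mt n d x) (mt n d y)]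
    & (0 < d.2)%N -> forall x, (mt n d x).2 = x.2 ].

(** Stacking A on top of B. A state (k, true) means: at middle node k (bottom
    row of A = top row of B), about to follow the edge of A; (k,false): about
    to follow the edge of B. *)
Definition mstep (n : nat) (A B : rdiag) (s : int * bool) : option (int * bool) :=
  if s.2 then (let y := mt n A (s.1, false) in if y.2 then None else Some (y.1, false))
  else (let y := mt n B (s.1, true) in if y.2 then Some (y.1, true) else None).

Fixpoint miter (n : nat) (A B : rdiag) (j : nat) (s : int * bool) : option (int * bool) :=
  match j with
  | 0 => Some s
  | j'.+1 => obind (mstep n A B) (miter n A B j' s)
  end.

Fixpoint walk (n : nat) (A B : rdiag) (fuel : nat) (s : int * bool) : option node :=
  match fuel with
  | 0 => None
  | f.+1 =>
    if s.2 then (let y := mt n A (s.1, false) in if y.2 then Some y else walk n A B f (y.1, false))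
    else (let y := mt n B (s.1, true) in if y.2 then walk n A B f (y.1, true) else Some y)
  end.

(** Sufficient fuel: by periodicity a walk through the middle row visits at
    most 2n states before exiting or repeating. *)
Definition fuel (n : nat) : nat := (2 * n).+2.

Definition comp_match (n : nat) (A B : rdiag) (x : node) : node :=
  if x.2 then (let y := mt n A x in if y.2 then y else odflt x (walk n A B (fuel n) (y.1, false)))
  else (let y := mt n B x in if y.2 then odflt x (walk n A B (fuel n) (y.1, true)) else y).

Definition closedb (n : nat) (A B : rdiag) (k : int) : bool :=
  has (fun j => miter n A B j (k, true) == Some (k, true)) (iota 1 (fuel n)).
Definition loop_minb (n : nat) (A B : rdiag) (k : int) : bool :=
  all (fun j => if miter n A B j (k, true) is Some s then k <= s.1 else true) (iota 0 (fuel n)).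
(** middle node k lies on an infinite path (which becomes a horizontal line) *)
Definition infb (n : nat) (A B : rdiag) (k : int) : bool :=
  (miter n A B (fuel n) (k, true) != None) && ~~ closedb n A B k.
Definition inf_minb (n : nat) (A B : rdiag) (k : int) : bool :=
  all (fun j => if miter n A B j (k, true) is Some s then k <= (s.1 %% n%:Z)%Z else true)
      (iota 0 (fuel n)).

(** number of closed loops, counted up to translation by n *)
Definition nloops (n : nat) (A B : rdiag) : nat :=
  count (fun r : nat => closedb n A B r%:Z && loop_minb n A B r%:Z) (iota 0 n).
Definition nlines (n : nat) (A B : rdiag) : nat :=
  count (fun r : nat => infb n A B r%:Z && inf_minb n A B r%:Z) (iota 0 n).

(** AB = (v+v^-1)^x C : returns (x, C). *)
Definition rmul (n : nat) (A B : rdiag) : nat * rdiag :=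
  (nloops n A B, mk_rdiag n (comp_match n A B) (A.2 + B.2 + nlines n A B)%N).

(** Elements of D_n: finite formal R-linear combinations of diagrams;
    two elements are equal in D_n iff their coefficient functions agree. *)
Definition Dn (R : Type) := seq (R * rdiag).

Definition dcoef (R : nmodType) (a : Dn R) (D : rdiag) : R :=
  \sum_(p <- a | p.2 == D) p.1.

Definition Dbasis (R : pzSemiRingType) (D : rdiag) : Dn R := [:: (1, D)].

Definition dmul (R : pzSemiRingType) (n : nat) (delta : R) (a b : Dn R) : Dn R :=
  [seq (delta ^+ (rmul n p.2 q.2).1 * (p.1 * q.1), (rmul n p.2 q.2).2) | p <- a, q <- b].

(** The generators. E k = E_{\bar k}: cups/caps joining (j,_) and (j+1,_)
    for j = k mod n, vertical edges elsewhere. *)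
Definition Ef (n : nat) (k : int) (x : node) : node :=
  if ((x.1 - k) %% n%:Z)%Z == 0 then (x.1 + 1, x.2)
  else if ((x.1 - k - 1) %% n%:Z)%Z == 0 then (x.1 - 1, x.2)
  else (x.1, ~~ x.2).
Definition Ed (n : nat) (k : int) : rdiag := mk_rdiag n (Ef n k) 0.

(** u joins (j,0) to (j+1,1). *)
Definition uf (x : node) : node := if x.2 then (x.1 - 1, false) else (x.1 + 1, true).
Definition ud (n : nat) : rdiag := mk_rdiag n uf 0.

(* Main.v *)
Require Import Defs.
From HB Require Import structures.
From mathcomp Require Import all_boot all_order all_algebra.
From mathcomp Require Import zify.
Import GRing.Theory Num.Theory Order.TTheory.
Local Open Scope ring_scope.

Lemma modz_off (n : nat) (c t : int) : ((t + c * n%:Z) %% n%:Z)%Z = (t %% n%:Z)%Z.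
Proof. by rewrite addrC modzMDl. Qed.

Lemma modzE (n : nat) (q e : int) : (0 < n)%N ->
  -(2 * n%:Z) <= e - q * n%:Z < 3 * n%:Z ->
  (e %% n%:Z)%Z = let t := e - q * n%:Z in
     if t < - n%:Z then t + 2 * n%:Z else if t < 0 then t + n%:Z
     else if t < n%:Z then t else if t < 2 * n%:Z then t - n%:Z else t - 2 * n%:Z.
Proof.
move=> hn hr /=.
have -> : e = (e - q * n%:Z) + q * n%:Z by rewrite subrK.
rewrite modz_off; move: (e - q * n%:Z) hr => t hr.
rewrite addrK.
case: ifP => h1.
  have -> : t = (t + 2 * n%:Z) + (-2) * n%:Z by lia.
  rewrite modz_off modz_small //; lia.
case: ifP => h2.
  have -> : t = (t + n%:Z) + (-1) * n%:Z by lia.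
  rewrite modz_off modz_small //; lia.
case: ifP => h3.
  rewrite modz_small //; lia.
case: ifP => h4.
  have -> : t = (t - n%:Z) + 1 * n%:Z by lia.
  rewrite modz_off modz_small //; lia.
have -> : t = (t - 2 * n%:Z) + 2 * n%:Z by lia.
rewrite modz_off modz_small //; lia.
Qed.

Definition periodic n (f : node -> node) := forall (r c : int) (b : bool),
  f (r + c * n%:Z, b) = ((f (r, b)).1 + c * n%:Z, (f (r, b)).2).

Lemma mt_mk n f l x : (0 < n)%N -> periodic n f -> mt n (mk_rdiag n f l) x = f x.
Proof.
move=> hn hp; case: x => k b; rewrite /mt /mk_rdiag /=.
have r0 : 0 <= (k %% n%:Z)%Z by apply: modz_ge0; lia.
have rlt : (k %% n%:Z)%Z < n%:Z by apply: ltz_pmod; lia.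
have hj : (absz (k %% n%:Z)%Z < size (iota 0 n))%N by rewrite size_iota; lia.
have ek : k = (k %% n%:Z)%Z + (k %/ n%:Z)%Z * n%:Z by rewrite addrC -divz_eq.
have ea : ((absz (k %% n%:Z)%Z)%:Z = (k %% n%:Z)%Z) by lia.
have hj' : (absz (k %% n%:Z)%Z < n)%N by lia.
case: b; rewrite (nth_map 0%N) // nth_iota // add0n ea [in RHS]ek hp /shiftn;
  congr (_, _); lia.
Qed.

Lemma walkS n A B f s : walk n A B f.+1 s =
  if s.2 then (let y := mt n A (s.1, false) in if y.2 then Some y else walk n A B f (y.1, false))
  else (let y := mt n B (s.1, true) in if y.2 then walk n A B f (y.1, true) else Some y).
Proof. by []. Qed.
Lemma miterS n A B j s : miter n A B j.+1 s = obind (mstep n A B) (miter n A B j s).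
Proof. by []. Qed.
Lemma miter0 n A B s : miter n A B 0 s = Some s.
Proof. by []. Qed.
Lemma mstepE n A B s : mstep n A B s =
  if s.2 then (let y := mt n A (s.1, false) in if y.2 then None else Some (y.1, false))
  else (let y := mt n B (s.1, true) in if y.2 then Some (y.1, true) else None).
Proof. by []. Qed.
Lemma miter_none n A B j d s : miter n A B j s = None -> miter n A B (j + d) s = None.
Proof. move=> h; elim: d => [|d ih]; first by rewrite addn0. by rewrite addnS miterS ih. Qed.
Opaque mt walk modz miter mstep.
Definition sp n i (k : int) : int := ((k - i - 2) %% n%:Z)%Z.
Definition pf n i (m : int) (x : node) : node :=
  let s := sp n i x.1 in
  if x.2 then
    (if s == 0 then (x.1 + 1, true) else if s == 1 then (x.1 - 1, true)
     else if s < m then (x.1 - 2, false) else (x.1, false))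
  else
    (if s <= m - 3 then (x.1 + 2, true) else if s == m - 2 then (x.1 + 1, false)
     else if s == m - 1 then (x.1 - 1, false) else (x.1, true)).
Definition uf' := uf.
Definition u2f (x : node) : node := if x.2 then (x.1 - 2, false) else (x.1 + 2, true).

Lemma decomp n i k : (0 < n)%N -> exists (s q : int), 0 <= s < n%:Z /\ k = i + 2 + s + q * n%:Z.
Proof.
move=> hn; exists ((k - i - 2) %% n%:Z)%Z, ((k - i - 2) %/ n%:Z)%Z.
have h0 : 0 <= ((k - i - 2) %% n%:Z)%Z by apply: modz_ge0; lia.
have h1 : ((k - i - 2) %% n%:Z)%Z < n%:Z by apply: ltz_pmod; lia.
have := divz_eq (k - i - 2) n%:Z; lia.
Qed.

Ltac rmod n q hn := match goal with |- context [(modz ?e (Posz n))] =>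
  rewrite (@modzE n q e hn ltac:(lia)) end.
Ltac dec := match goal with |- context [if ?c then _ else _] =>
   first [ let H := fresh in (have H : c by lia); rewrite H; clear H
         | let H := fresh in (have H : ~~ c by lia); rewrite (negbTE H); clear H ] end.
Ltac splt := match goal with
  | |- context [if (?a < ?b) then _ else _] => case: (boolP (a < b)) => ?
  | |- context [if (?a <= ?b) then _ else _] => case: (boolP (a <= b)) => ?
  | |- context [if (?a == ?b :> int) then _ else _] => case: (boolP (a == b)) => ?
  end.


Ltac crunch hA hB n q hn0 := repeat first [ progress rewrite ?hA ?hB
  | progress rewrite /pf /Ef /sp /uf /u2f
  | progress cbn [fst snd negb Option.default Option.bind Option.apply odflt oapp obind]
  | rmod n q hn0 | dec | splt | rewrite mstepE | rewrite walkS | rewrite miterS | rewrite miter0 ].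
Ltac finish := try (exfalso; lia); try (congr (_, _); lia); try done;
  try (apply/eqP; case=> *; try done; lia).

Lemma noloop n A B k : (3 <= n)%N -> miter n A B 4 (k, true) = None ->
  miter n A B 1 (k, true) != Some (k, true) -> miter n A B 2 (k, true) != Some (k, true) ->
  miter n A B 3 (k, true) != Some (k, true) ->
  closedb n A B k = false /\ infb n A B k = false.
Proof.
move=> hn h4 h1 h2 h3.
have hc : closedb n A B k = false.
  rewrite /closedb; apply/negbTE/hasPn => j; rewrite mem_iota => /andP [j1 j2].
  case: j j1 j2 => [|[|[|[|j]]]] // _ _.
  by rewrite (_ : j.+4 = 4 + j)%N // miter_none.
split => //; rewrite /infb hc (_ : fuel n = 4 + (fuel n - 4))%N; last by rewrite /fuel; lia.
by rewrite miter_none.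
Qed.

Lemma nloops0 n A B : (forall k, closedb n A B k = false) -> nloops n A B = 0%N.
Proof. move=> h; rewrite /nloops (@eq_count _ _ pred0) ?count_pred0 // => r /=; by rewrite h. Qed.
Lemma nlines0 n A B : (forall k, infb n A B k = false) -> nlines n A B = 0%N.
Proof. move=> h; rewrite /nlines (@eq_count _ _ pred0) ?count_pred0 // => r /=; by rewrite h. Qed.

Lemma rmul_ok n A B F : (forall x, comp_match n A B x = F x) ->
  (forall k, closedb n A B k = false /\ infb n A B k = false) -> A.2 = 0%N -> B.2 = 0%N ->
  rmul n A B = (0%N, mk_rdiag n F 0).
Proof.
move=> hF hk hA hB; rewrite /rmul nloops0 ?nlines0; try by move=> k; case: (hk k).
have e : forall b, [seq comp_match n A B (r%:Z, b) | r <- iota 0 n] = [seq F (r%:Z, b) | r <- iota 0 n].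
  by move=> b; apply: eq_map => r; exact: hF.
by rewrite /mk_rdiag !e hA hB.
Qed.

Lemma step_cm n i (m : int) A B : (3 <= n)%N -> 2 <= m <= n%:Z - 1 ->
  (forall x, mt n A x = pf n i m x) -> (forall x, mt n B x = Ef n (i + m + 1) x) ->
  forall x, comp_match n A B x = pf n i (m + 1) x.
Proof.
move=> hn hm hA hB [k b].
have hn0 : (0 < n)%N by lia.
case: (@decomp n i k hn0) => s [q [hs ->]].
rewrite /comp_match (_ : fuel n = (2 * n - 2).+4)%N; last by rewrite /fuel; lia.
case: b; cbn [fst snd].
all: crunch hA hB n q hn0.
all: finish.
Qed.

Lemma step_loop n i (m : int) A B : (3 <= n)%N -> 2 <= m <= n%:Z - 1 ->
  (forall x, mt n A x = pf n i m x) -> (forall x, mt n B x = Ef n (i + m + 1) x) ->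
  forall k, closedb n A B k = false /\ infb n A B k = false.
Proof.
move=> hn hm hA hB k.
have hn0 : (0 < n)%N by lia.
case: (@decomp n i k hn0) => s [q [hs ->]].
apply: noloop => //.
all: crunch hA hB n q hn0.
all: finish.
Qed.

Lemma uu_cm n A B : (3 <= n)%N ->
  (forall x, mt n A x = uf x) -> (forall x, mt n B x = uf x) ->
  forall x, comp_match n A B x = u2f x.
Proof.
move=> hn hA hB [k b].
have hn0 : (0 < n)%N by lia.
have q : int := 0.
rewrite /comp_match (_ : fuel n = (2 * n - 2).+4)%N; last by rewrite /fuel; lia.
case: b; cbn [fst snd].
all: crunch hA hB n q hn0.
all: finish.
Qed.

Lemma uu_loop n A B : (3 <= n)%N ->
  (forall x, mt n A x = uf x) -> (forall x, mt n B x = uf x) ->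
  forall k, closedb n A B k = false /\ infb n A B k = false.
Proof.
move=> hn hA hB k.
have hn0 : (0 < n)%N by lia.
have q : int := 0.
apply: noloop => //.
all: crunch hA hB n q hn0.
all: finish.
Qed.

Lemma u2E_cm n i A B : (3 <= n)%N ->
  (forall x, mt n A x = u2f x) -> (forall x, mt n B x = Ef n i x) ->
  forall x, comp_match n A B x = pf n i n%:Z x.
Proof.
move=> hn hA hB [k b].
have hn0 : (0 < n)%N by lia.
case: (@decomp n i k hn0) => s [q [hs ->]].
rewrite /comp_match (_ : fuel n = (2 * n - 2).+4)%N; last by rewrite /fuel; lia.
case: b; cbn [fst snd].
all: crunch hA hB n q hn0.
all: finish.
Qed.

Lemma u2E_loop n i A B : (3 <= n)%N ->
  (forall x, mt n A x = u2f x) -> (forall x, mt n B x = Ef n i x) ->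
  forall k, closedb n A B k = false /\ infb n A B k = false.
Proof.
move=> hn hA hB k.
have hn0 : (0 < n)%N by lia.
case: (@decomp n i k hn0) => s [q [hs ->]].
apply: noloop => //.
all: crunch hA hB n q hn0.
all: finish.
Qed.

Lemma base_eq n i x : (3 <= n)%N -> Ef n (i + 2) x = pf n i 2 x.
Proof.
move=> hn; case: x => k b.
have hn0 : (0 < n)%N by lia.
case: (@decomp n i k hn0) => s [q [hs ->]].
case: b; cbn [fst snd].
all: crunch hn hn n q hn0.
all: finish.
Qed.


Ltac crunch2 n q q2 hn0 := repeat first [
    progress rewrite /pf /Ef /sp /uf /u2f
  | progress cbn [fst snd negb]
  | rmod n q hn0 | rmod n q2 hn0 | dec | splt ].

Lemma per_pf n i m : (3 <= n)%N -> periodic n (pf n i m).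
Proof.
move=> hn r c b; have hn0 : (0 < n)%N by lia.
case: (@decomp n i r hn0) => s [q [hs ->]].
case: b; crunch2 n q (q + c) hn0; finish.
Qed.

Lemma per_Ef n k : (3 <= n)%N -> periodic n (Ef n k).
Proof.
move=> hn r c b; have hn0 : (0 < n)%N by lia.
case: (@decomp n (k - 2) r hn0) => s [q [hs ->]].
case: b; crunch2 n q (q + c) hn0; finish.
Qed.

Lemma per_uf n : periodic n uf.
Proof. move=> r c [] /=; rewrite /uf /=; congr (_, _); lia. Qed.
Lemma per_u2f n : periodic n u2f.
Proof. move=> r c [] /=; rewrite /u2f /=; congr (_, _); lia. Qed.


Lemma mk_ext n f g l : (forall x, f x = g x) -> mk_rdiag n f l = mk_rdiag n g l.
Proof.
move=> h; rewrite /mk_rdiag.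
by rewrite (eq_map (fun r => h (r%:Z, true))) (eq_map (fun r => h (r%:Z, false))).
Qed.

Opaque rmul.

Lemma dmul1 (R : comPzRingType) n (d : R) a b A B :
  dmul n d [:: (a, A)] [:: (b, B)] = [:: (d ^+ (rmul n A B).1 * (a * b), (rmul n A B).2)].
Proof. by []. Qed.

Theorem lemma2p3p2 (R : comPzRingType) (v vinv : R) (hv : v * vinv = 1)
  (n : nat) (hn : (3 <= n)%N) (i : int) :
  forall D : rdiag,
    dcoef (foldl (dmul n (v + vinv)) (Dbasis R (Ed n (i + 2)))
                 [seq Dbasis R (Ed n (i + j%:Z)) | j <- iota 3 (n - 2)]) D
    = dcoef (dmul n (v + vinv) (dmul n (v + vinv) (Dbasis R (ud n)) (Dbasis R (ud n)))
                  (Dbasis R (Ed n i))) D.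
Proof.
move=> D.
have hn0 : (0 < n)%N by lia.
set d := v + vinv.
pose Pd (m : int) := mk_rdiag n (pf n i m) 0.
have mtP : forall m x, mt n (Pd m) x = pf n i m x.
  by move=> m x; apply: mt_mk => //; apply: per_pf.
have mtE : forall c x, mt n (Ed n c) x = Ef n c x.
  by move=> c x; apply: mt_mk => //; apply: per_Ef.
have mtU : forall x, mt n (ud n) x = uf x.
  by move=> x; apply: mt_mk => //; apply: per_uf.
have mtU2 : forall x, mt n (mk_rdiag n u2f 0) x = u2f x.
  by move=> x; apply: mt_mk => //; apply: per_u2f.
have step : forall m, 2 <= m <= n%:Z - 1 ->
    rmul n (Pd m) (Ed n (i + m + 1)) = (0%N, Pd (m + 1)).
  move=> m hm; apply: rmul_ok => //.
  - exact: step_cm (mtP m) (mtE _).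
  - exact: step_loop (mtP m) (mtE _).
have fold : forall k, (k <= n - 2)%N ->
    foldl (dmul n d) (Dbasis R (Ed n (i + 2)))
      [seq Dbasis R (Ed n (i + j%:Z)) | j <- iota 3 k] = [:: (1, Pd (2 + k%:Z))].
  elim=> [|k ih] hk.
    rewrite /= /Dbasis addr0; congr [:: (_, _)].
    by apply: mk_ext => x; apply: base_eq.
  rewrite (_ : iota 3 k.+1 = iota 3 k ++ [:: (3 + k)%N]); last by rewrite -[k.+1]addn1 iotaD.
  rewrite map_cat foldl_cat ih; last by lia.
  rewrite /= /Dbasis dmul1 (_ : i + (3 + k)%:Z = i + (2 + k%:Z) + 1); last by lia.
  rewrite step; last by lia.
  rewrite /= expr0 !mul1r; congr [:: (_, _)]; congr Pd; lia.
rewrite fold; last by lia.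
rewrite /Dbasis !dmul1.
have -> : rmul n (ud n) (ud n) = (0%N, mk_rdiag n u2f 0).
  apply: rmul_ok => //.
  - exact: (uu_cm _ _ _ hn mtU mtU).
  - exact: (uu_loop _ _ _ hn mtU mtU).
have -> : rmul n (mk_rdiag n u2f 0) (Ed n i) = (0%N, Pd n%:Z).
  apply: rmul_ok => //.
  - exact: (u2E_cm _ _ _ _ hn mtU2 (mtE _)).
  - exact: (u2E_loop _ _ _ _ hn mtU2 (mtE _)).
rewrite /= !expr0 !mul1r ?mulr1.
by rewrite (_ : 2 + (n - 2)%N%:Z = n%:Z); last by lia.
Qed.
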